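(* Let $0<m<1$, $\mu>0$, $f$ smooth, $u_->u_+=0$, $s=\frac{f(u_+)-f(u_-)}{u_+-u_-}$ with $f'(u_+)<s<f'(u_-)$, and let $U$ be a monotonically decreasing viscous shock profile, i.e. $-sU'+f(U)'=\mu(U^m)''$ with $U(-\infty)=u_-$, $U(+\infty)=u_+$. Then there is a constant $C>0$ such that for all $\xi\in\mathbb{R}$, $$|U_\xi(\xi)|\le CU(\xi)^{2-m},\qquad |U_{\xi\xi}(\xi)|\le CU(\xi)^{3-2m}.$$ *)

(* Defs.v *)
From Stdlib Require Import Reals.
From Coquelicot Require Import Coquelicot.
Open Scope R_scope.

Definition smooth (f : R -> R) : Prop := forall (k : nat) (x : R), ex_derive_n f k x.

(* Main.v *)
Require Import Defs.
From Stdlib Require Import Reals Lra.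
From Coquelicot Require Import Coquelicot.
Open Scope R_scope.

Lemma Upos_lem (U : R -> R)
  (hdec : forall x y, x < y -> U y < U x)
  (hlimp : is_lim U p_infty 0) : forall x, 0 < U x.
Proof.
  intros x. apply Rnot_le_lt; intro Hx.
  apply is_lim_spec in hlimp. simpl in hlimp.
  assert (H1 : U (x+1) < U x) by (apply hdec; lra).
  destruct (hlimp (mkposreal (- U (x+1)) ltac:(lra))) as [M HM].
  set (y := Rmax M (x+1) + 1).
  assert (Hy1 : M < y) by (unfold y; generalize (Rmax_l M (x+1)); lra).
  assert (Hy2 : x + 1 < y) by (unfold y; generalize (Rmax_r M (x+1)); lra).
  specialize (HM y Hy1). simpl in HM.
  assert (H2 : U y < U (x+1)) by (apply hdec; lra).
  rewrite Rminus_0_r, Rabs_left in HM; lra.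
Qed.

Lemma Ule_lem (U : R -> R) (u_minus : R)
  (hdec : forall x y, x < y -> U y < U x)
  (hlimm : is_lim U m_infty u_minus) : forall x, U x <= u_minus.
Proof.
  intros x. apply Rnot_lt_le; intro Hx.
  apply is_lim_spec in hlimm. simpl in hlimm.
  destruct (hlimm (mkposreal (U x - u_minus) ltac:(lra))) as [M HM].
  set (y := Rmin M x - 1).
  assert (Hy1 : y < M) by (unfold y; generalize (Rmin_l M x); lra).
  assert (Hy2 : y < x) by (unfold y; generalize (Rmin_r M x); lra).
  specialize (HM y Hy1). simpl in HM.
  assert (H2 : U x < U y) by (apply hdec; lra).
  rewrite Rabs_right in HM; lra.
Qed.

Lemma is_derive_Rpow (a u : R) : 0 < u ->
  is_derive (fun v => Rpower v a) u (a * Rpower u (a-1)).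
Proof. intros; apply is_derive_Reals, derivable_pt_lim_power; auto. Qed.

Lemma is_derive_Rpow_comp (U : R -> R) (a x : R) : 0 < U x -> ex_derive U x ->
  is_derive (fun y => Rpower (U y) a) x (a * Rpower (U x) (a-1) * Derive U x).
Proof.
  intros Hp Hd.
  assert (H := is_derive_comp (fun v => Rpower v a) U x _ _ (is_derive_Rpow a (U x) Hp) (Derive_correct U x Hd)).
  replace (a * Rpower (U x) (a - 1) * Derive U x) with (scal (Derive U x) (a * Rpower (U x) (a - 1))).
  exact H.
  unfold scal; simpl; unfold mult; simpl; ring.
Qed.

Lemma fprime_bound (f : R -> R) (b : R) : 0 <= b ->
  (forall x, ex_derive (Derive f) x) ->
  exists L, 0 <= L /\ forall c, 0 <= c <= b -> Rabs (Derive f c) <= L.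
Proof.
  intros Hb Hd2.
  assert (Hc : forall c, continuity_pt (Derive f) c).
  { intros c; apply continuity_pt_filterlim; apply (@ex_derive_continuous R_AbsRing R_NormedModule (Derive f)); auto. }
  destruct (continuity_ab_maj (Derive f) 0 b Hb (fun c _ => Hc c)) as [x1 [H1 _]].
  destruct (continuity_ab_maj (fun c => - Derive f c) 0 b Hb) as [x2 [H2 _]].
  { intros c _. apply (continuity_pt_opp (Derive f)); auto. }
  exists (Rabs (Derive f x1) + Rabs (Derive f x2)); split.
  - generalize (Rabs_pos (Derive f x1)) (Rabs_pos (Derive f x2)); lra.
  - intros c Hcb. specialize (H1 c Hcb). specialize (H2 c Hcb).
    generalize (Rle_abs (Derive f x1)) (Rle_abs (- Derive f x2)); rewrite Rabs_Ropp; intros.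
    generalize (Rabs_pos (Derive f x1)) (Rabs_pos (Derive f x2)); intros.
    unfold Rabs at 1; destruct (Rcase_abs (Derive f c)); lra.
Qed.

Lemma f_lip (f : R -> R) (b L : R) :
  (forall x, ex_derive f x) ->
  (forall c, 0 <= c <= b -> Rabs (Derive f c) <= L) ->
  forall u, 0 < u <= b -> Rabs (f u - f 0) <= L * u.
Proof.
  intros Hd HL u Hu.
  destruct (MVT_cor2 f (Derive f) 0 u) as [c [Hc1 Hc2]]; [lra| |].
  { intros c _. apply is_derive_Reals, Derive_correct; auto. }
  rewrite Hc1, Rminus_0_r, Rabs_mult, (Rabs_right u) by lra.
  apply Rmult_le_compat_r; [lra|]. apply HL; lra.
Qed.

Lemma first_integral (m mu s : R) (f U : R -> R)
  (hfd : forall x, ex_derive f x)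
  (Upos : forall x, 0 < U x)
  (hU1 : forall x, ex_derive U x)
  (hU2 : forall x, ex_derive (Derive U) x)
  (hode : forall x,
      - s * Derive U x + Derive (fun y => f (U y)) x
      = mu * Derive_n (fun y => Rpower (U y) m) 2 x) :
  exists K, forall x, mu * (m * Rpower (U x) (m-1) * Derive U x) = f (U x) - s * U x - K.
Proof.
  assert (DVeq : forall x, Derive (fun y => Rpower (U y) m) x = m * Rpower (U x) (m-1) * Derive U x).
  { intros x; apply is_derive_unique, is_derive_Rpow_comp; auto. }
  assert (exDV : forall x, ex_derive (Derive (fun y => Rpower (U y) m)) x).
  { intros x. apply (ex_derive_ext (fun t => m * Rpower (U t) (m-1) * Derive U t)).
    { intros t; rewrite DVeq; reflexivity. }
    apply ex_derive_mult; auto. apply ex_derive_scal.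
    eexists; apply is_derive_Rpow_comp; auto. }
  set (phi := fun t => - s * U t + f (U t) - mu * Derive (fun y => Rpower (U y) m) t).
  assert (Dphi : forall c, derivable_pt_lim phi c 0).
  { intros c. apply is_derive_Reals.
    assert (H : is_derive (fun t => minus (plus (- s * U t) (f (U t))) (mu * Derive (fun y => Rpower (U y) m) t)) c
       (minus (plus (- s * Derive U c) (Derive (fun y => f (U y)) c)) (mu * Derive (Derive (fun y => Rpower (U y) m)) c))).
    { apply (@is_derive_minus R_AbsRing R_NormedModule). apply (@is_derive_plus R_AbsRing R_NormedModule).
      apply is_derive_scal, Derive_correct; auto.
      apply Derive_correct, ex_derive_comp; auto.
      apply is_derive_scal, Derive_correct; auto. }
    replace 0 with (minus (plus (- s * Derive U c) (Derive (fun y => f (U y)) c)) (mu * Derive (Derive (fun y => Rpower (U y) m)) c)).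
    - eapply is_derive_ext; [|exact H]. intros t; unfold phi, minus, plus, opp; simpl. ring.
    - unfold minus, plus, opp; simpl. rewrite hode. simpl. apply Rplus_opp_r. }
  exists (phi 0). intros x.
  assert (Hx : phi x = phi 0).
  { destruct (Rtotal_order x 0) as [H|[H|H]].
    - destruct (MVT_cor2 phi (fun _ => 0) x 0 H) as [c [Hc _]]. intros; apply Dphi. lra.
    - subst; reflexivity.
    - destruct (MVT_cor2 phi (fun _ => 0) 0 x H) as [c [Hc _]]. intros; apply Dphi. lra. }
  rewrite <- Hx. unfold phi. rewrite DVeq. ring.
Qed.

Lemma Rpower_pos' (x y : R) : 0 < Rpower x y.
Proof. unfold Rpower; apply exp_pos. Qed.

Lemma K_eq (m mu s K A : R) (f U : R -> R) (hm0 : 0 < m) (hmu : 0 < mu)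
  (Upos : forall x, 0 < U x)
  (hU1 : forall x, ex_derive U x)
  (hdec : forall x y, x < y -> U y < U x)
  (hlimp : is_lim U p_infty 0)
  (hA : 0 <= A)
  (hbound : forall x, Rabs (f (U x) - f 0 - s * U x) <= A * U x)
  (HK : forall x, mu * (m * Rpower (U x) (m-1) * Derive U x) = f (U x) - s * U x - K) :
  K = f 0.
Proof.
  destruct (Req_dec (f 0 - K) 0) as [Hd|Hd]; [lra|].
  exfalso. set (d := f 0 - K) in *.
  apply is_lim_spec in hlimp. simpl in hlimp.
  assert (Hdpos : 0 < Rabs d) by (apply Rabs_pos_lt; auto).
  destruct (hlimp (mkposreal (Rabs d / (2 * (A + 1))) ltac:(apply Rdiv_lt_0_compat; lra))) as [M HM].
  simpl in HM.
  assert (HW : forall x, M < x -> Rabs (mu * (m * Rpower (U x) (m-1) * Derive U x) - d) < Rabs d / 2).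
  { intros x Hx. specialize (HM x Hx). rewrite Rminus_0_r, Rabs_right in HM by (generalize (Upos x); lra).
    rewrite HK. unfold d.
    replace (f (U x) - s * U x - K - (f 0 - K)) with (f (U x) - f 0 - s * U x) by ring.
    eapply Rle_lt_trans; [apply hbound|].
    apply (Rmult_lt_compat_l (2 * (A+1))) in HM; [|lra].
    replace (2 * (A + 1) * (Rabs d / (2 * (A + 1)))) with (Rabs d) in HM by (field; lra).
    generalize (Upos x); intros.
    assert (A * U x <= (A + 1) * U x) by (apply Rmult_le_compat_r; lra).
    fold d; lra. }
  destruct (Rtotal_order d 0) as [Hneg|[H0|Hp]]; [| contradiction |].
  -
    rewrite Rabs_left in HW by lra.
    set (a := M + 1).
    set (t := 2 * mu * Rpower (U a) m / (- d)).
    assert (Ht : 0 < t).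
    { unfold t. apply Rdiv_lt_0_compat; [|lra]. generalize (Rpower_pos' (U a) m); nra. }
    destruct (MVT_cor2 (fun y => Rpower (U y) m) (fun x => m * Rpower (U x) (m-1) * Derive U x) a (a + t))
      as [z [Hz1 Hz2]]; [lra| |].
    { intros c _. apply is_derive_Reals, is_derive_Rpow_comp; auto. }
    assert (Hwz := HW z ltac:(unfold a in *; lra)).
    apply Rabs_def2 in Hwz. destruct Hwz as [Hw1 Hw2].
    set (w := m * Rpower (U z) (m - 1) * Derive U z) in *.
    assert (Hw : mu * w < d / 2) by lra.
    assert (Hwt : mu * w * t < d / 2 * t) by (apply Rmult_lt_compat_r; lra).
    assert (E : d / 2 * t = - mu * Rpower (U a) m) by (unfold t; field; lra).
    generalize (Rpower_pos' (U (a + t)) m); intros.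
    replace (a + t - a) with t in Hz1 by ring.
    assert (E2 : mu * (Rpower (U (a + t)) m - Rpower (U a) m) = mu * w * t) by (rewrite Hz1; ring).
    assert (0 < mu * Rpower (U (a + t)) m) by (apply Rmult_lt_0_compat; auto).
    lra.
  -
    rewrite Rabs_right in HW by lra.
    destruct (MVT_cor2 U (Derive U) (M + 1) (M + 2)) as [z [Hz1 Hz2]]; [lra| |].
    { intros c _. apply is_derive_Reals, Derive_correct; auto. }
    assert (Hwz := HW z ltac:(lra)).
    apply Rabs_def2 in Hwz. destruct Hwz as [Hw1 Hw2].
    assert (HP : 0 < m * Rpower (U z) (m - 1)) by (apply Rmult_lt_0_compat; [lra | apply Rpower_pos']).
    assert (HU' : 0 < Derive U z).
    { apply Rnot_le_lt; intro Hle.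
      assert (m * Rpower (U z) (m - 1) * Derive U z <= 0) by nra. nra. }
    assert (U (M + 2) < U (M + 1)) by (apply hdec; lra).
    replace (M + 2 - (M + 1)) with 1 in Hz1 by ring. lra.
Qed.


Theorem lemma5p1 (m mu : R) (f : R -> R) (u_minus s : R) (U : R -> R)
  (hm0 : 0 < m) (hm1 : m < 1) (hmu : 0 < mu)
  (hf : smooth f)
  (hum : 0 < u_minus)
  (hs : s = (f 0 - f u_minus) / (0 - u_minus))
  (hLax1 : Derive f 0 < s) (hLax2 : s < Derive f u_minus)
  (hU1 : forall x, ex_derive U x)
  (hU2 : forall x, ex_derive (Derive U) x)
  (hdec : forall x y, x < y -> U y < U x)
  (hode : forall x,
      - s * Derive U x + Derive (fun y => f (U y)) x
      = mu * Derive_n (fun y => Rpower (U y) m) 2 x)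
  (hlimm : is_lim U m_infty u_minus)
  (hlimp : is_lim U p_infty 0) :
  exists C : R, 0 < C /\
    forall xi : R,
      Rabs (Derive U xi) <= C * Rpower (U xi) (2 - m) /\
      Rabs (Derive_n U 2 xi) <= C * Rpower (U xi) (3 - 2 * m).
Proof.
  assert (Upos := Upos_lem U hdec hlimp).
  assert (Ule := Ule_lem U u_minus hdec hlimm).
  assert (hfd : forall x, ex_derive f x) by (intros x; exact (hf 1%nat x)).
  assert (hfd2 : forall x, ex_derive (Derive f) x) by (intros x; exact (hf 2%nat x)).
  destruct (fprime_bound f u_minus ltac:(lra) hfd2) as [L [HL0 HL]].
  set (A := L + Rabs s).
  assert (HA0 : 0 <= A) by (unfold A; generalize (Rabs_pos s); lra).
  assert (hlip := f_lip f u_minus L hfd HL).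
  assert (hbound : forall x, Rabs (f (U x) - f 0 - s * U x) <= A * U x).
  { intros x. unfold Rminus at 1. eapply Rle_trans; [apply Rabs_triang|].
    rewrite Rabs_Ropp, Rabs_mult, (Rabs_right (U x)) by (generalize (Upos x); lra).
    generalize (hlip (U x) (conj (Upos x) (Ule x))). unfold A; lra. }
  destruct (first_integral m mu s f U hfd Upos hU1 hU2 hode) as [K HK].
  assert (HKe := K_eq m mu s K A f U hm0 hmu Upos hU1 hdec hlimp HA0 hbound HK).
  subst K.
  set (h := fun v => f v - f 0 - s * v).
  set (G := fun v => Rpower v (1-m) * h v / (mu * m)).
  set (G' := fun v => ((1-m) * Rpower v (-m) * h v + Rpower v (1-m) * (Derive f v - s)) / (mu * m)).
  assert (Hkey : forall x, Derive U x = G (U x)).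
  { intros x. specialize (HK x). unfold G, h.
    assert (E : Rpower (U x) (m-1) * Rpower (U x) (1-m) = 1).
    { rewrite <- Rpower_plus. replace (m - 1 + (1 - m)) with 0 by ring. apply Rpower_O; auto. }
    replace (f (U x) - f 0 - s * U x) with (f (U x) - s * U x - f 0) by ring.
    rewrite <- HK.
    replace (Rpower (U x) (1 - m) * (mu * (m * Rpower (U x) (m - 1) * Derive U x)) / (mu * m))
      with ((Rpower (U x) (m - 1) * Rpower (U x) (1 - m)) * Derive U x * ((mu * m) / (mu * m))) by (unfold Rdiv; ring).
    rewrite E. unfold Rdiv; rewrite Rinv_r; [ring|]. apply Rgt_not_eq, Rmult_lt_0_compat; lra. }
  assert (HG' : forall u, 0 < u -> is_derive G u (G' u)).
  { intros u Hu. unfold G, G', h. auto_derive.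
    - split; [eexists; apply is_derive_Rpow; auto | split; auto].
    - replace (Derive (fun x : R => Rpower x (1 - m)) u) with ((1-m) * Rpower u (-m)).
      2:{ symmetry; apply is_derive_unique. replace (- m) with (1 - m - 1) by ring. apply is_derive_Rpow; auto. }
      change (Derive (fun x => f x) u) with (Derive f u).
      unfold Rdiv; ring. }
  assert (HDD : forall x, Derive_n U 2 x = G' (U x) * Derive U x).
  { intros x. change (Derive_n U 2 x) with (Derive (Derive U) x).
    rewrite (Derive_ext (Derive U) (fun t => G (U t)) x Hkey).
    apply is_derive_unique.
    assert (H := is_derive_comp G U x _ _ (HG' (U x) (Upos x)) (Derive_correct U x (hU1 x))).
    replace (G' (U x) * Derive U x) with (scal (Derive U x) (G' (U x))).
    exact H. unfold scal; simpl; unfold mult; simpl; ring. }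
  set (C1 := A / (mu * m)).
  assert (HC1 : 0 <= C1) by (unfold C1; apply Rdiv_le_0_compat; [lra| apply Rmult_lt_0_compat; lra]).
  exists (C1 + 2 * C1 * C1 + 1). split; [nra|].
  intros xi.
  set (u := U xi). assert (Hu : 0 < u) by apply Upos. assert (Hu2 : u <= u_minus) by apply Ule.
  set (a := Rpower u (-m)). assert (Ha : 0 < a) by apply Rpower_pos'.
  assert (E1 : Rpower u (1 - m) = a * u).
  { unfold a. replace (1 - m) with (- m + 1) by ring. rewrite Rpower_plus, Rpower_1 by auto; reflexivity. }
  assert (E2 : Rpower u (2 - m) = a * u * u).
  { replace (2 - m) with ((1 - m) + 1) by ring. rewrite Rpower_plus, E1, Rpower_1 by auto; reflexivity. }
  assert (E3 : Rpower u (3 - 2 * m) = a * a * u * u * u).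
  { replace (3 - 2 * m) with ((1 - m) + (2 - m)) by ring. rewrite Rpower_plus, E1, E2; ring. }
  assert (Hh : Rabs (h u) <= A * u) by apply hbound.
  assert (Hfs : Rabs (Derive f u - s) <= A).
  { unfold Rminus. eapply Rle_trans; [apply Rabs_triang|]. rewrite Rabs_Ropp.
    generalize (HL u ltac:(lra)). unfold A; lra. }
  assert (HmuM : 0 < mu * m) by (apply Rmult_lt_0_compat; lra).
  assert (B1 : Rabs (Derive U xi) <= C1 * (a * u * u)).
  { rewrite Hkey. fold u. unfold G. rewrite E1. unfold C1.
    unfold Rdiv. rewrite !Rabs_mult, (Rabs_right a), (Rabs_right u), (Rabs_right (/ (mu * m))) by
      (try apply Rle_ge, Rlt_le, Rinv_0_lt_compat; lra).
    assert (0 < / (mu * m)) by (apply Rinv_0_lt_compat; lra).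
    assert (a * u * Rabs (h u) <= a * u * (A * u)) by (apply Rmult_le_compat_l; nra).
    nra. }
  assert (B2 : Rabs (G' u) <= 2 * C1 * (a * u)).
  { unfold G'. rewrite E1. unfold C1, Rdiv.
    rewrite Rabs_mult, (Rabs_right (/ (mu * m))) by (apply Rle_ge, Rlt_le, Rinv_0_lt_compat; lra).
    assert (0 < / (mu * m)) by (apply Rinv_0_lt_compat; lra).
    replace (2 * (A * / (mu * m)) * (a * u)) with ((2 * A * (a * u)) * / (mu * m)) by ring.
    apply Rmult_le_compat_r; [lra|].
    eapply Rle_trans; [apply Rabs_triang|].
    rewrite !Rabs_mult, (Rabs_right (1 - m)), (Rabs_right a), (Rabs_right u) by lra.
    assert ((1 - m) * a * Rabs (h u) <= (1 - m) * a * (A * u)) by (apply Rmult_le_compat_l; nra).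
    assert (a * u * Rabs (Derive f u - s) <= a * u * A) by (apply Rmult_le_compat_l; nra).
    fold a. rewrite (Rabs_right a) by lra.
    assert (0 <= m * (a * (A * u))) by (apply Rmult_le_pos; [lra|]; apply Rmult_le_pos; nra).
    nra. }
  assert (Hpos : 0 <= a * u * u) by (apply Rmult_le_pos; nra).
  split.
  - fold u. rewrite E2. nra.
  - rewrite HDD. fold u. rewrite E3, Rabs_mult.
    assert (Rabs (G' u) * Rabs (Derive U xi) <= (2 * C1 * (a * u)) * (C1 * (a * u * u))).
    { apply Rmult_le_compat; auto using Rabs_pos. }
    assert (0 <= a * a * u * u * u) by (apply Rmult_le_pos; nra).
    nra.
Qed.
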